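(* With probability $1$, the graphs $G(X^{(n)})$ and $G^\prime(X^{(n)})$ have the same connected components.
   Context: Fix an integer $d\ge2$ and $n\ge1$. $\mathbb{T}_n$ is the torus obtained from $[-n/2,n/2]^d$ by identifying opposite faces, with toroidal distance ${\rm d}_{\mathbb{T}_n}$ and $B^{\mathbb{T}_n}_r(\xi)=\{\eta\in\mathbb{T}_n:{\rm d}_{\mathbb{T}_n}(\xi,\eta)\le r\}$. $R$ is a nonnegative random variable with absolutely continuous distribution such that $\lim_{h\to\infty}h^s\mathbb{P}(R>h)=\beta$ for some $\beta,s\in(0,\infty)$. $X^{(n)}$ is a homogeneous Poisson point process of intensity $1$ on $\mathbb{T}_n$, each point independently marked with a mark in $[0,\infty)$ distributed as $R$ (points written $(\xi,r)$). $G(X^{(n)})$ has vertex set $X^{(n)}$ and a directed edge from $(\xi,r)$ to $(\eta,t)$ whenever $\eta\in B^{\mathbb{T}_n}_r(\xi)$. $G^\prime(X^{(n)})$ has vertex set $X^{(n)}$ and a directed edge from $(\xi,r)$ to $(\eta,t)$ iff $(\eta,t)\in B^{\mathbb{T}_n}_r(\xi)\times[0,r)$ and there is no $(\zeta,w)\in X^{(n)}\cap(B^{\mathbb{T}_n}_r(\xi)\times(t,r))$ with $\eta\in B^{\mathbb{T}_n}_w(\zeta)$. Connected components are taken ignoring edge directions. *)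

(* Defs.v *)
From HB Require Import structures.
From mathcomp Require Import all_boot all_order all_algebra.
From mathcomp Require Import all_classical all_reals all_analysis.
Import Order.TTheory GRing.Theory Num.Theory.
Import numFieldNormedType.Exports.

Set Implicit Arguments.
Unset Strict Implicit.
Unset Printing Implicit Defensive.

Local Open Scope classical_set_scope.
Local Open Scope ring_scope.

Section torus_graphs.
Context {R : realType} {d : nat}.

(* Toroidal distance on T_n (the cube [-n/2,n/2]^d with opposite faces
   identified): d_{T_n}(x,y) = inf_{k in Z^d} |x - y + n k|  (Euclidean norm). *)
Definition tdist (n : nat) (x y : 'I_d -> R) : R :=
  inf [set r : R | exists k : 'I_d -> int,
        r = Num.sqrt (\sum_(j < d) (x j - y j + (k j)%:~R * n%:R) ^+ 2)].

Definition in_tball (n : nat) (xi : 'I_d -> R) (r : R) (eta : 'I_d -> R) : bool :=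
  tdist n xi eta <= r.

Definition edgeG (n N : nat) (x : nat -> 'I_d -> R) (m : nat -> R) : rel 'I_N :=
  fun i j => in_tball n (x i) (m i) (x j).

Definition edgeG' (n N : nat) (x : nat -> 'I_d -> R) (m : nat -> R) : rel 'I_N :=
  fun i j =>
    [&& in_tball n (x i) (m i) (x j), 0 <= m j, m j < m i &
        ~~ [exists k : 'I_N,
              [&& in_tball n (x i) (m i) (x k), m j < m k, m k < m i &
                  in_tball n (x k) (m k) (x j)]]].

Definition undirected (T : Type) (e : rel T) : rel T := fun i j => e i j || e j i.

Definition same_components (N : nat) (e e' : rel 'I_N) : Prop :=
  forall i j : 'I_N, connect (undirected e) i j = connect (undirected e') i j.

End torus_graphs.

Arguments tdist {R d} n x y.
Arguments in_tball {R d} n xi r eta.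
Arguments edgeG {R d} n N x m.
Arguments edgeG' {R d} n N x m.
Arguments same_components N e e'.


Section marked_ppp.
Context {R : realType} {dT : measure_display} {T : measurableType dT}.
Variable P : probability T R.

Definition mutually_independent (I : eqType) (X : I -> T -> R) : Prop :=
  (forall i, measurable_fun setT (X i)) /\
  forall (J : seq I) (B : I -> set R), uniq J -> (forall i, measurable (B i)) ->
    P [set w | forall i, i \in J -> B i (X i w)] =
    \big[*%E/1%E]_(i <- J) P (X i @^-1` B i).

(* Index set of the random ingredients of the marked process:
   None             : the number of points N,
   Some (k, Some j) : the j-th coordinate of the k-th point,
   Some (k, None)   : the mark of the k-th point. *)
Definition ppp_index (d : nat) := option (nat * option 'I_d).

(* X^{(n)} is a homogeneous Poisson point process of intensity 1 on T_n
   (represented on the fundamental cube [-n/2,n/2]^d), each point independently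
   marked with law mu.  Standard construction: the number of points N is
   Poisson(n^d) = Poisson(|T_n|), and given N the points are i.i.d. uniform on
   the cube with i.i.d. marks of law mu, everything independent.  The k-th
   point is (x k w, m k w) for k < N w. *)
Definition marked_ppp_torus (d n : nat) (mu : probability R R)
    (N : T -> nat) (x : nat -> 'I_d -> T -> R) (m : nat -> T -> R) : Prop :=
  let X : ppp_index d -> T -> R := fun a =>
    match a with
    | None => fun w => (N w)%:R
    | Some (k, Some j) => x k j
    | Some (k, None) => m k
    end in
  [/\ mutually_independent X,
      (forall k : nat, P (N @^-1` [set k]) = (poisson_pmf (n%:R ^+ d) k)%:E),
      (forall k j (B : set R), measurable B ->
         P (x k j @^-1` B) =
         (lebesgue_measure (B `&` `[(- (n%:R / 2))%R, (n%:R / 2)%R]) * (n%:R^-1)%:E)%E) &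
      (forall k (B : set R), measurable B -> P (m k @^-1` B) = mu B)].

End marked_ppp.

Arguments marked_ppp_torus {R dT T} P d n mu N x m.

(* Main.v *)
Require Import Defs.
From HB Require Import structures.
From mathcomp Require Import all_boot all_order all_algebra.
From mathcomp Require Import all_classical all_reals all_analysis.
From mathcomp Require Import ring.
Import Order.TTheory GRing.Theory Num.Theory.
Import numFieldNormedType.Exports.
Local Open Scope classical_set_scope.
Local Open Scope ring_scope.

Lemma tdist_sym (R : realType) (d n : nat) (x y : 'I_d -> R) :
  tdist n x y = tdist n y x.
Proof.
rewrite /tdist; congr inf; apply/seteqP; split => r [k ->];
  exists (fun j => - k j); congr Num.sqrt; apply: eq_bigr => j _;
  by rewrite mulrNz mulNr -sqrrN; congr (_ ^+ 2); ring.
Qed.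

Section det.
Variables (R : realType) (d n N : nat) (x : nat -> 'I_d -> R) (m : nat -> R).
Hypothesis m0 : forall i : 'I_N, 0 <= m i.
Hypothesis minj : forall i j : 'I_N, m i = m j -> i = j.

Let G := edgeG n N x m.
Let G' := edgeG' n N x m.

Lemma sub_G'G : subrel G' G.
Proof. by move=> i j /and4P[]. Qed.

Lemma key (c : nat) : forall i j : 'I_N,
  (#|[pred l : 'I_N | ((m j <= m l) && (m l <= m i))%R]| <= c)%N ->
  m j < m i -> G i j -> connect (undirected G') i j.
Proof.
elim: c => [|c IH] i j.
  rewrite leqn0 => /eqP/card0_eq/(_ i); rewrite !inE /= => + ji; by rewrite lexx (ltW ji).
move=> hc ji Gij.
have [G'ij|nG'] := boolP (G' i j).
  by apply: connect1; rewrite /undirected G'ij.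
have : [exists k : 'I_N, [&& in_tball n (x i) (m i) (x k), m j < m k, m k < m i &
                  in_tball n (x k) (m k) (x j)]].
  move: nG'; rewrite /G' /edgeG'. have -> : in_tball n (x i) (m i) (x j) = true := Gij. rewrite m0 ji /=.
  by rewrite negbK.
case/existsP => k /and4P[Gik jk ki Gkj].
have h1 : connect (undirected G') i k.
  apply: (IH i k) => //.
  rewrite -ltnS; apply: leq_trans hc; apply: proper_card; apply/properP; split.
    apply/fintype.subsetP => l; rewrite !inE => /andP[kl ->]; by rewrite (le_trans (ltW jk) kl).
  by exists j; rewrite !inE ?lexx ?(ltW ji) // leNgt jk.
apply: connect_trans h1 _.
apply: (IH k j) => //.
rewrite -ltnS; apply: leq_trans hc; apply: proper_card; apply/properP; split.
  apply/fintype.subsetP => l; rewrite !inE => /andP[-> lk]; by rewrite (le_trans lk (ltW ki)).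
by exists i; rewrite !inE ?lexx ?(ltW ji) // /= leNgt ki ?andbF.
Qed.

Lemma det_same : same_components G G'.
Proof.
move=> i j; apply/idP/idP.
  apply: connect_sub => {i j} i j.
  have H : forall a b : 'I_N, G a b -> connect (undirected G') a b.
    move=> a b Gab.
    have [->|ab] := eqVneq a b; first exact: connect0.
    have mab : m a != m b by apply/eqP => /minj/eqP; rewrite (negbTE ab).
    case: (ltgtP (m a) (m b)) mab => // [ablt|balt] _.
      have : connect (undirected G') b a.
        apply: (key _ _ _ (leqnn _)) => //.
        by rewrite /G /edgeG /in_tball tdist_sym (le_trans Gab (ltW ablt)).
      by rewrite sym_connect_sym // => u v; rewrite /undirected orbC.
    exact: (key _ _ _ (leqnn _)).
  case/orP => [/H //|/H].
  by rewrite sym_connect_sym // => u v; rewrite /undirected orbC.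
apply: connect_sub => {i j} i j /orP[] h; apply: connect1;
  by rewrite /undirected (sub_G'G _ _ h) ?orbT.
Qed.

End det.

Lemma ac_eps (R : realType) (mu : probability R R) :
  mu `<< (@lebesgue_measure R) -> forall e : R, 0 < e -> exists dl : R, 0 < dl /\
  forall A : set R, measurable A -> (lebesgue_measure A < dl%:E)%E -> (mu A < e%:E)%E.
Proof.
Local Open Scope ereal_scope.
move=> numu.
apply/not_forallP => -[e] /not_implyP[e0] /forallNP H.
have {H} : forall n, exists A : set R,
    [/\ measurable A, (lebesgue_measure A < (2 ^- n.+1)%:E)%E & (mu A >= e%:E)%E].
  move=> n; have /not_andP[|] := H (2 ^- n.+1); first by rewrite invr_gt0.
  move=> /existsNP[A] /not_implyP[mA] /not_implyP[Aab] /negP.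
  by rewrite -leNgt => eint; exists A.
move=> /choice[F /= H].
have mF i : measurable (F i) by have [] := H i.
have : lebesgue_measure (lim_sup_set F) = 0%E.
  apply: lim_sup_set_cvg0 => //.
  have h : \sum_(0 <= n < k) (1 / 2 ^+ n.+1)%:E @[k --> \oo] --> (1%E : \bar R).
    apply/fine_cvgP; split.
      apply: nearW => /= n; rewrite sum_fin_num//.
      by apply/allP => /= r /mapP[/= k _] ->.
    have := @cvg_geometric_series_half R 1 0; rewrite {1}/series/= expr0 divr1.
    under [in X in _ -> X]eq_fun do rewrite sumEFin.
    by under eq_fun do under eq_bigr do rewrite addn1 natrX.
  apply: (@le_lt_trans _ _ (\sum_(0 <= n <oo) (1 / (2 ^ n.+1))%:E)).
    apply: lee_lim.
    - exact: is_cvg_ereal_nneg_natsum_cond.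
    - by apply/cvg_ex; exists 1%E.
    - apply: nearW => /= n; apply: lee_sum => i _.
      by have [_ /ltW + _] := H i; rewrite div1r.
  by move/cvg_lim : h => ->//; rewrite ltry.
have mL : measurable (lim_sup_set F).
  by apply: bigcap_measurable => // k _; exact: bigcup_measurable.
move=> L0.
have : mu (lim_sup_set F) = 0%E.
  apply: (numu (lim_sup_set F)) => //.
  by move=> B mB BL; apply/eqP; rewrite eq_le measure_ge0 andbT -L0 le_measure// inE.
apply/eqP; rewrite neq_lt// ltNge measure_ge0//=.
suff : (mu (lim_sup_set F) >= e%:E)%E by exact: lt_le_trans.
have echarge n : (e%:E <= mu (\bigcup_(j >= n) F j))%E.
  have [_ _ /le_trans] := H n; apply.
  rewrite le_measure// ?inE//; first exact: bigcup_measurable.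
  by apply: bigcup_sup => /=.
have /(_ _ _)/cvg_lim <-// := lim_sup_set_cvg mu F.
  apply: lime_ge.
    apply: ereal_nonincreasing_is_cvgn => a b ab.
    rewrite le_measure ?inE//; [exact: bigcup_measurable|
                                exact: bigcup_measurable|].
    by apply: bigcup_subset => n/=; exact: leq_trans.
  by apply: nearW => k; exact: echarge.
by rewrite -ge0_fin_numE// fin_num_measure//; exact: bigcup_measurable.
Qed.
Local Close Scope ereal_scope.

Lemma diag_meas (R : realType) (dT : measure_display) (T : measurableType dT)
  (mk ml : T -> R) :
  measurable_fun setT mk -> measurable_fun setT ml ->
  measurable [set w | mk w = ml w /\ 0 <= mk w].
Proof.
move=> mmk mml.
  have -> : [set w | mk w = ml w /\ 0 <= mk w] =
   ((mk \- ml) @^-1` [set 0]) `&` (mk @^-1` `[0, +oo[).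
  apply/seteqP; split => w /=.
    by move=> [-> h]; rewrite subrr in_itv /= andbT.
  by move=> [/eqP]; rewrite subr_eq0 in_itv /= andbT => /eqP -> ->.
apply: measurableI.
  by rewrite -[_ @^-1` _]setTI; apply: (measurable_realfun.measurable_funB mmk mml).
by rewrite -[_ @^-1` _]setTI; apply: mmk.
Qed.

Lemma diag_null (R : realType) (dT : measure_display) (T : measurableType dT)
  (P : probability T R) (mu : probability R R) (mk ml : T -> R) :
  measurable_fun setT mk -> measurable_fun setT ml ->
  (forall B : set R, measurable B -> P (mk @^-1` B `&` ml @^-1` B) = (mu B * mu B)%E) ->
  mu `<< (@lebesgue_measure R) ->
  P [set w | mk w = ml w /\ 0 <= mk w] = 0%E.
Proof.
move=> mmk mml ind ac.
have mD := @diag_meas R dT T mk ml mmk mml.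
apply/eqP; rewrite eq_le measure_ge0 andbT.
apply/lee_addgt0Pr => e e0; rewrite add0e.
have [dl [dl0 Hdl]] := @ac_eps R mu ac e e0.
pose h := dl / 2.
have h0 : 0 < h by rewrite divr_gt0.
pose J (z : nat) : set R := `[z%:R * h, z.+1%:R * h[%classic.
have mJ z : measurable (J z) by apply: measurable_itv.
have muJ z : (mu (J z) < e%:E)%E.
  apply: Hdl => //.
  rewrite /J lebesgue_measure_itv /= lte_fin ltr_pM2r // ltr_nat ltnSn.
  rewrite -EFinD lte_fin -mulrBl -natrB // subSnn mul1r.
  by rewrite /h ltr_pdivrMr // ltr_pMr // ltr1n.
have E z : measurable (mk @^-1` J z `&` ml @^-1` J z).
  apply: measurableI; rewrite -[_ @^-1` _]setTI; [exact: mmk | exact: mml].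
have cover : [set w | mk w = ml w /\ 0 <= mk w] `<=`
    \bigcup_z (mk @^-1` J z `&` ml @^-1` J z).
  move=> w [eqw hw].
  have /andP[t1 t2] := truncn_itv (divr_ge0 hw (ltW h0)).
  exists (Num.trunc (mk w / h)) => //.
  rewrite /J /= -eqw in_itv /=.
  by rewrite -ler_pdivlMr // t1 -ltr_pdivrMr // t2.
apply: le_trans (measure_sigma_subadditive P E mD cover) _.
apply: (@le_trans _ _ (\big[+%E/0%R]_(0 <= z <oo) (e%:E * mu (J z))%E)).
  apply: lee_nneseries => [z _ _|z _]; first exact: measure_ge0.
  apply: (@le_trans _ _ (mu (J z) * mu (J z))%E).
    by rewrite le_eqVlt; apply/orP; left; apply/eqP; exact: ind.
  apply: lee_wpmul2r; first exact: measure_ge0.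
  exact: ltW.
rewrite nneseriesZl; last by move=> z _; exact: measure_ge0.
rewrite -[leRHS]mule1; apply: lee_wpmul2l; first by rewrite lee_fin ltW.
have mU : measurable (\bigcup_(z in [set: nat]) J z) by apply: bigcup_measurable.
apply: le_trans (probability_le1 mu mU).
rewrite (measure_bigcup mu setT) //; last first.
  move=> i j _ _ [y [a b]]; move: a b; rewrite /J /= !in_itv /= => /andP[a1 a2] /andP[b1 b2].
  have ij : (i%:R * h < j.+1%:R * h :> R) by exact: le_lt_trans a1 b2.
  have ji : (j%:R * h < i.+1%:R * h :> R) by exact: le_lt_trans b1 a2.
  rewrite ltr_pM2r // ltr_nat in ij.
  rewrite ltr_pM2r // ltr_nat in ji.
  by apply/eqP; rewrite eqn_leq -ltnS ij -ltnS ji.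
apply: subset_lee_nneseries => [i _|i _]; [exact: measure_ge0|by rewrite in_setT].
Qed.

Theorem proposition5p1 (R : realType) (d n : nat) (mu : probability R R)
    (beta s : R) (dT : measure_display) (T : measurableType dT)
    (P : probability T R) (N : T -> nat) (x : nat -> 'I_d -> T -> R)
    (m : nat -> T -> R) :
  (2 <= d)%N -> (1 <= n)%N ->
  (* R >= 0 *)
  mu `]-oo, 0[%classic = 0%E ->
  (* R has an absolutely continuous distribution *)
  mu `<< (@lebesgue_measure R) ->
  (* lim_{h -> oo} h^s P(R > h) = beta, with beta, s in (0, oo) *)
  0 < beta -> 0 < s ->
  h `^ s * fine (mu `]h, +oo[%classic) @[h --> +oo] --> beta ->
  marked_ppp_torus P d n mu N x m ->
  \forall w \ae P,
    same_components (edgeG n (N w) (fun k j => x k j w) (fun k => m k w))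
                    (edgeG' n (N w) (fun k j => x k j w) (fun k => m k w)).
Proof.
move=> _ _ neg0 ac _ _ _.
rewrite /marked_ppp_torus => -[[mX indp] _ _ Pm].
have mm k : measurable_fun setT (m k) := mX (Some (k, None)).
have nn : \forall w \ae P, forall k, 0 <= m k w.
  apply: ae_foralln => k.
  exists (m k @^-1` `]-oo, 0[); split.
  - by rewrite -[_ @^-1` _]setTI; apply: (mm k) => //; exact: measurable_itv.
  - exact: (etrans (Pm k _ (measurable_itv _)) neg0).
  - by move=> w /= /negP; rewrite -ltNge in_itv /=.
have dd : \forall w \ae P, forall k l, k <> l -> 0 <= m k w -> m k w <> m l w.
  apply: ae_foralln => k; apply: ae_foralln => l.
  have [<-|kl] := eqVneq k l; first by apply: aeW => w.
  exists [set w | m k w = m l w /\ 0 <= m k w]; split.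
  - exact: diag_meas.
  - have ind : forall B : set R, measurable B ->
        P (m k @^-1` B `&` m l @^-1` B) = (mu B * mu B)%E.
      move=> B mB.
      have U : uniq [:: Some (k, None); Some (l, None) : ppp_index d].
        by rewrite /= inE andbT; apply/eqP => -[/eqP]; rewrite (negbTE kl).
      have := indp _ (fun _ => B) U (fun _ => mB).
      rewrite !big_cons big_nil mule1 /= => eq1.
      apply: (etrans _ (etrans eq1 _)).
        apply: congr1; apply/seteqP; split => w /=.
          by move=> [hk hl] i; rewrite !inE => /orP[]/eqP ->.
        move=> H; split.
          by apply: (H (Some (k, None))); rewrite !inE eqxx.
        by apply: (H (Some (l, None))); rewrite !inE eqxx orbT.
      exact: (congr2 _ (Pm k B mB) (Pm l B mB)).
    exact: (@diag_null R dT T P mu _ _ (mm k) (mm l) ind ac).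
  - move=> w /= H; split; apply: contrapT => h; apply: H => _.
      by move=> _; exact: h.
    by move=> h2; exfalso; exact: h h2.
apply: filter_app2 nn dd; apply: aeW => w h1 h2.
apply: det_same.
  by move=> i; exact: h1.
move=> i j eij; apply: val_inj => /=.
by apply: contrapT => ij; exact: h2 _ _ ij (h1 _) eij.
Qed.
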